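(* Let $\varphi:\mathbb R^d\to\mathbb R\cup\{+\infty\}$ be proper, convex, lsc and satisfy property (X) with some constant $D>0$. Let $C>0$ and $\alpha_0>0$. For $i=1,2$ let $\zeta_i\in W^{1,\infty}(0,\infty)^d$ solve $\alpha_i(t)\dot\zeta_i+\partial\varphi(\zeta_i)\ni g_i(t)$ a.e., $\zeta_i(0)=\zeta_{0i}$, with $\zeta_{0i}\in\mathcal D_C(\varphi)$, $\alpha_i\in L^\infty_{loc}(0,\infty)$, $\alpha_i\ge\alpha_0$ a.e., $g_i\in L^\infty(0,\infty)^d$, $|g_i(t)|\le C$ a.e. Then there exists a constant $L$ (depending on $C$ and $D$) such that for every $t\in(0,\infty)$ $$|\zeta_1-\zeta_2|(t)\le|\zeta_{01}-\zeta_{02}|+L\int_0^t\Big(\Big|\frac1{\alpha_1}-\frac1{\alpha_2}\Big|+|g_1-g_2|\Big)d\tau.$$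
   Context: $\mathcal D_C(\varphi)=\{\chi\in\mathrm{dom}\,\varphi:\exists\xi\in\partial\varphi(\chi),|\xi|\le C\}$. Property (X) with constant $D$: for every $C>0$, every $\zeta_0\in\mathcal D_C(\varphi)$, every $\alpha\in L^\infty_{loc}(0,\infty)$ with $\alpha\ge\alpha_0>0$ a.e. (some $\alpha_0$), and every $g\in L^\infty(0,\infty)^d$ with $|g|\le C$ a.e., the solution $\zeta\in W^{1,1}_{loc}(0,\infty)^d$ of $\alpha\zeta_t+\partial\varphi(\zeta)\ni g$ a.e., $\zeta(0)=\zeta_0$, satisfies $|g(t)-\alpha(t)\zeta_t(t)|\le DC$ a.e. *)

(* Defs.v *)
From HB Require Import structures.
From mathcomp Require Import all_boot all_order all_algebra.
From mathcomp Require Import all_classical all_reals all_analysis.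
Set Implicit Arguments. Unset Strict Implicit. Unset Printing Implicit Defensive.
Import Order.TTheory GRing.Theory Num.Theory.
Local Open Scope classical_set_scope.
Local Open Scope ring_scope.

Section Defs.
Variables (R : realType) (d : nat).
Notation vec := 'rV[R]_d.

Definition vdot (x y : vec) : R := \sum_(i < d) x ord0 i * y ord0 i.
Definition enorm (x : vec) : R := Num.sqrt (vdot x x).

Definition never_minfty (phi : vec -> \bar R) := forall x, phi x != -oo%E.
Definition proper_fun (phi : vec -> \bar R) :=
  never_minfty phi /\ exists x, (phi x < +oo)%E.
Definition convex_fun (phi : vec -> \bar R) :=
  forall (x y : vec) (l : R), 0 < l -> l < 1 ->
    (phi ((l *: x + (1 - l) *: y)%R) <= l%:E * phi x + (1 - l)%:E * phi y)%E.
Definition lsc_fun (phi : vec -> \bar R) :=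
  forall (x : vec) (c : R), (c%:E < phi x)%E ->
    exists2 delta : R, 0 < delta &
      forall y, enorm (y - x) < delta -> (c%:E < phi y)%E.

Definition dom (phi : vec -> \bar R) : set vec := [set x | (phi x < +oo)%E].

Definition subdiff (phi : vec -> \bar R) (chi xi : vec) : Prop :=
  (phi chi < +oo)%E /\
  forall y, ((fine (phi chi) + vdot xi (y - chi))%:E <= phi y)%E.

Definition DC (phi : vec -> \bar R) (C : R) : set vec :=
  [set chi | dom phi chi /\ exists xi, subdiff phi chi xi /\ enorm xi <= C].

(* zeta is a W^{1,1}_loc(0,oo)^d function with (weak) derivative zeta' :
   zeta' is locally integrable on [0,oo) and zeta is its primitive. *)
Definition W11loc (zeta zeta' : R -> vec) : Prop :=
  forall i : 'I_d,
    (forall T : R, 0 < T ->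
       lebesgue_measure.-integrable `[0, T] (fun s => (zeta' s ord0 i)%:E)) /\
    (forall t : R, 0 <= t ->
       zeta t ord0 i = zeta 0 ord0 i + Rintegral lebesgue_measure `[0, t] (fun s => zeta' s ord0 i)).

Definition is_solution (phi : vec -> \bar R) (alpha : R -> R) (g : R -> vec)
    (zeta0 : vec) (zeta zeta' : R -> vec) : Prop :=
  [/\ W11loc zeta zeta', zeta 0 = zeta0 &
      {ae lebesgue_measure, forall t, 0 < t ->
         subdiff phi (zeta t) (g t - alpha t *: zeta' t)}].

Definition admissible_alpha (alpha : R -> R) (alpha0 : R) : Prop :=
  [/\ measurable_fun (`]0%R, +oo[ : set R) alpha,
      (forall T : R, 0 < T -> exists M : R,
         {ae lebesgue_measure, forall t, 0 < t < T -> `|alpha t| <= M}) &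
      {ae lebesgue_measure, forall t, 0 < t -> alpha0 <= alpha t}].

Definition Linf_vec (g : R -> vec) : Prop :=
  (forall i : 'I_d, measurable_fun (`]0%R, +oo[ : set R) (fun t => g t ord0 i)) /\
  exists M : R, {ae lebesgue_measure, forall t, 0 < t -> enorm (g t) <= M}.

Definition property_X (phi : vec -> \bar R) (D : R) : Prop :=
  forall (C : R), 0 < C -> forall zeta0, DC phi C zeta0 ->
  forall (alpha : R -> R) (alpha0 : R), 0 < alpha0 -> admissible_alpha alpha alpha0 ->
  forall (g : R -> vec), Linf_vec g ->
    {ae lebesgue_measure, forall t, 0 < t -> enorm (g t) <= C} ->
  forall zeta zeta', is_solution phi alpha g zeta0 zeta zeta' ->
    {ae lebesgue_measure, forall t, 0 < t -> enorm (g t - alpha t *: zeta' t) <= D * C}.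

Definition W1inf (zeta zeta' : R -> vec) : Prop :=
  W11loc zeta zeta' /\ exists M : R,
    (forall t, 0 <= t -> enorm (zeta t) <= M) /\
    {ae lebesgue_measure, forall t, 0 < t -> enorm (zeta' t) <= M}.

End Defs.

(* Main.v *)
Require Import Defs.
From HB Require Import structures.
From mathcomp Require Import all_boot all_order all_algebra.
From mathcomp Require Import all_classical all_reals all_analysis.
From mathcomp Require Import ring lra.
Import Order.TTheory GRing.Theory Num.Theory.
Set Implicit Arguments. Unset Strict Implicit.
Local Open Scope classical_set_scope.
Local Open Scope ring_scope.



Section Vec.
Variables (R : realType) (d : nat).
Notation vec := 'rV[R]_d.
Implicit Types x y z : vec.

Lemma vdotC x y : vdot x y = vdot y x.
Proof. by apply: eq_bigr => i _; rewrite mulrC. Qed.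

Lemma vdotDr x y z : vdot x (y + z) = vdot x y + vdot x z.
Proof. by rewrite /vdot -big_split; apply: eq_bigr => i _; rewrite !mxE mulrDr. Qed.

Lemma vdotNr x y : vdot x (- y) = - vdot x y.
Proof. by rewrite /vdot -sumrN; apply: eq_bigr => i _; rewrite !mxE mulrN. Qed.

Lemma vdotBr x y z : vdot x (y - z) = vdot x y - vdot x z.
Proof. by rewrite vdotDr vdotNr. Qed.

Lemma vdotZr x y (a : R) : vdot x (a *: y) = a * vdot x y.
Proof. by rewrite /vdot mulr_sumr; apply: eq_bigr => i _; rewrite !mxE mulrCA. Qed.

Lemma vdotDl x y z : vdot (y + z) x = vdot y x + vdot z x.
Proof. by rewrite vdotC vdotDr !(vdotC x). Qed.
Lemma vdotBl x y z : vdot (y - z) x = vdot y x - vdot z x.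
Proof. by rewrite vdotC vdotBr !(vdotC x). Qed.
Lemma vdotZl x y (a : R) : vdot (a *: y) x = a * vdot y x.
Proof. by rewrite vdotC vdotZr vdotC. Qed.
Lemma vdotNl x y : vdot (- y) x = - vdot y x.
Proof. by rewrite vdotC vdotNr vdotC. Qed.

Lemma vdot_ge0 x : 0 <= vdot x x.
Proof. by apply: sumr_ge0 => i _; rewrite -expr2 sqr_ge0. Qed.

Lemma enorm_ge0 x : 0 <= enorm x.
Proof. exact: sqrtr_ge0. Qed.

Lemma enorm_sqr x : enorm x ^+ 2 = vdot x x.
Proof. by rewrite sqr_sqrtr // vdot_ge0. Qed.

Lemma vdot0_coord x : vdot x x = 0 -> forall i, x ord0 i = 0.
Proof.
move=> h i; have := @psumr_eq0P R 'I_d xpredT (fun i => x ord0 i * x ord0 i).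
move=> /(_ (fun j _ => ltac:(by rewrite -expr2 sqr_ge0)) h i isT) /eqP.
by rewrite mulf_eq0 orbb => /eqP.
Qed.

Lemma vdot0l x y : vdot x x = 0 -> vdot x y = 0.
Proof.
move=> h; rewrite /vdot big1 // => i _; by rewrite (@vdot0_coord x h i) mul0r.
Qed.

Lemma CS x y : vdot x y <= enorm x * enorm y.
Proof.
have [hx|hx] := eqVneq (enorm x) 0.
  by rewrite vdot0l ?hx ?mul0r // -enorm_sqr hx expr0n.
have [hy|hy] := eqVneq (enorm y) 0.
  by rewrite vdotC vdot0l ?hy ?mulr0 // -enorm_sqr hy expr0n.
have px : 0 < enorm x by rewrite lt_def hx enorm_ge0.
have py : 0 < enorm y by rewrite lt_def hy enorm_ge0.
set u := enorm y *: x - enorm x *: y.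
have := vdot_ge0 u.
rewrite /u !(vdotBl, vdotBr, vdotZl, vdotZr) -!enorm_sqr (vdotC y x).
move=> h.
have : 0 <= 2 * (enorm x * enorm y) * (enorm x * enorm y - vdot x y).
  by move: h; set a := enorm x; set b := enorm y; set c := vdot x y; move=> h; nra.
rewrite pmulr_rge0 ?subr_ge0 // mulr_gt0 // mulr_gt0 //.
Qed.

Lemma CSabs x y : `|vdot x y| <= enorm x * enorm y.
Proof.
rewrite ler_norml CS andbT.
have := CS (- x) y; rewrite vdotNl.
have -> : enorm (- x) = enorm x by rewrite /enorm vdotNl vdotNr opprK.
by rewrite lerNl.
Qed.

Lemma enormN x : enorm (- x) = enorm x.
Proof. by rewrite /enorm vdotNl vdotNr opprK. Qed.

Lemma enormZ (a : R) x : enorm (a *: x) = `|a| * enorm x.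
Proof.
by rewrite /enorm vdotZl vdotZr mulrA -expr2 sqrtrM ?sqr_ge0 // sqrtr_sqr.
Qed.

Lemma enormD x y : enorm (x + y) <= enorm x + enorm y.
Proof.
have h : enorm (x + y) ^+ 2 <= (enorm x + enorm y) ^+ 2.
  rewrite enorm_sqr !(vdotDl, vdotDr) sqrrD -!enorm_sqr (vdotC y x).
  have := CS x y; lra.
have := enorm_ge0 (x + y); have := enorm_ge0 x; have := enorm_ge0 y; nra.
Qed.

Lemma enormB x y : enorm (x - y) <= enorm x + enorm y.
Proof. by rewrite -(enormN y) enormD. Qed.

Lemma coord_le x i : `|x ord0 i| <= enorm x.
Proof.
rewrite -(sqrtr_sqr (x ord0 i)) /enorm ler_sqrt ?vdot_ge0 //.
rewrite /vdot (bigD1 i) //= expr2 lerDl; apply: sumr_ge0 => j _.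
by rewrite -expr2 sqr_ge0.
Qed.

Lemma enorm_le_sum x : enorm x <= \sum_i `|x ord0 i|.
Proof.
have s0 : 0 <= \sum_i `|x ord0 i| by apply: sumr_ge0.
rewrite /enorm -(ger0_norm s0) -sqrtr_sqr ler_sqrt ?sqr_ge0 //.
rewrite /vdot expr2 mulr_suml; apply: ler_sum => i _.
rewrite -expr2 -real_normK ?num_real // expr2; apply: ler_wpM2l => //.
by rewrite (bigD1 i) //= lerDl sumr_ge0.
Qed.

End Vec.



Section Int.
Variable R : realType.
Local Notation mu := (@lebesgue_measure R).

Lemma ae_le_Rint (D : set R) (f1 f2 : R -> R) : measurable D ->
  mu.-integrable D (EFin \o f1) -> mu.-integrable D (EFin \o f2) ->
  {ae mu, forall x, D x -> f1 x <= f2 x} ->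
  Rintegral mu D f1 <= Rintegral mu D f2.
Proof.
move=> mD i1 i2 [N [mN N0 sub]].
rewrite /Rintegral (negligible_integral mN mD i1 N0) (negligible_integral mN mD i2 N0).
have mDN : measurable (D `\` N) by exact: measurableD.
apply: (@le_Rintegral _ _ R mu (D `\` N) f1 f2 mDN).
- by apply: integrableS i1 => //; exact: subDsetl.
- by apply: integrableS i2 => //; exact: subDsetl.
move=> x [Dx Nx]; apply: contrapT => h; apply: Nx; apply: sub => /= hh.
by apply: h; apply: hh.
Qed.

Lemma Rint_sum (I : Type) (s : seq I) (D : set R) (F : I -> R -> R) :
  measurable D -> (forall i, mu.-integrable D (EFin \o F i)) ->
  mu.-integrable D (EFin \o (fun x => \sum_(i <- s) F i x)) /\
  Rintegral mu D (fun x => \sum_(i <- s) F i x) = \sum_(i <- s) Rintegral mu D (F i).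
Proof.
move=> mD iF; elim: s => [|i s [ih1 ih2]].
  split.
    apply: (@eq_integrable _ _ _ mu D mD (cst 0%E)); last exact: integrable0.
    by move=> x _ /=; rewrite big_nil.
  rewrite big_nil (_ : (fun x => _) = (fun _ => 0)); last by apply/funext => x; rewrite big_nil.
  by rewrite Rintegral_cst // mul0r.
split.
  apply: (@eq_integrable _ _ _ mu D mD ((EFin \o F i) \+ (EFin \o fun x => \sum_(i <- s) F i x))).
    by move=> x _ /=; rewrite big_cons.
  exact: integrableD.
rewrite big_cons -ih2 -RintegralD //.
by apply: eq_Rintegral => x _; rewrite big_cons.
Qed.

Lemma int_cst_itv (a b c : R) : mu.-integrable `]a, b] (EFin \o cst c).
Proof.
apply: measurable_bounded_integrable => //.
- have := lebesgue_measure_itv `]a, b]; rewrite /= => ->.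
  by case: ifP => // _; rewrite -EFinD ltry.
exact: bounded_cst.
Qed.

Lemma Rint_cst_itv (a b c : R) : a <= b -> Rintegral mu `]a, b] (fun _ => c) = c * (b - a).
Proof.
move=> ab; rewrite Rintegral_cst //.
have := lebesgue_measure_itv `]a, b]; rewrite /= => ->.
rewrite lte_fin; case: ltgtP ab => //.
by move=> -> _; rewrite subrr /= mulr0.
Qed.

Lemma measurable_inv : measurable_fun [set: R] (@GRing.inv R).
Proof.
have -> : [set: R] = ~` [set 0] `|` [set 0] by rewrite setUC setUv.
apply/measurable_funU => //; first by apply: measurableC.
split; last exact: measurable_fun_set1.
apply: measurable_realfun.open_continuous_measurable_fun.
  by apply: closed_openC; apply: compact_closed; [exact: Rhausdorff|exact: compact_set1].
move=> x; rewrite inE /= => x0; apply: inv_continuous; exact/eqP.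
Qed.

Lemma measurable_sqrt : measurable_fun [set: R] (@Num.sqrt R).
Proof. by apply: measurable_realfun.continuous_measurable_fun; exact: sqrt_continuous. Qed.

End Int.



Section Key.
Variables (R : realType) (d : nat).
Notation vec := 'rV[R]_d.

Lemma fin_of (phi : vec -> \bar R) x : never_minfty phi -> (phi x < +oo)%E ->
  phi x = (fine (phi x))%:E.
Proof.
move=> nm lt; by rewrite fineK // fin_numE nm /= lt_eqF.
Qed.

Lemma subdiff_mono (phi : vec -> \bar R) x1 x2 xi1 xi2 : never_minfty phi ->
  subdiff phi x1 xi1 -> subdiff phi x2 xi2 -> 0 <= vdot (xi1 - xi2) (x1 - x2).
Proof.
move=> nm [f1 h1] [f2 h2].
have := h1 x2; rewrite (fin_of nm f2) lee_fin => i1.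
have := h2 x1; rewrite (fin_of nm f1) lee_fin => i2.
move: i1 i2; rewrite !(vdotBl, vdotBr) (vdotC xi1 x2) (vdotC xi2 x1) (vdotC xi1 x1) (vdotC xi2 x2).
lra.
Qed.

Lemma key (phi : vec -> \bar R) (D C a0 al1 al2 : R) (x1 x2 z1 z2 g1 g2 v : vec) :
  never_minfty phi -> 0 < a0 -> 0 <= D -> 0 <= C ->
  a0 <= al1 -> a0 <= al2 -> enorm g2 <= C ->
  subdiff phi x1 (g1 - al1 *: z1) -> subdiff phi x2 (g2 - al2 *: z2) ->
  enorm (g1 - al1 *: z1) <= D * C -> enorm (g2 - al2 *: z2) <= D * C ->
  vdot v (z1 - z2) <= enorm v * ((a0^-1 + (D + 1) * C) *
      (`|al1^-1 - al2^-1| + enorm (g1 - g2))) + (2 * D * C / a0) * enorm (v - (x1 - x2)).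
Proof.
move=> nm a0p D0 C0 h1 h2 hg2 s1 s2 n1 n2.
set xi1 := g1 - al1 *: z1 in s1 n1; set xi2 := g2 - al2 *: z2 in s2 n2.
have al1p : 0 < al1 by apply: lt_le_trans h1.
have al2p : 0 < al2 by apply: lt_le_trans h2.
have ez1 : z1 = al1^-1 *: (g1 - xi1).
  by rewrite /xi1 opprB addrC subrK scalerA mulVf ?gt_eqF // scale1r.
have ez2 : z2 = al2^-1 *: (g2 - xi2).
  by rewrite /xi2 opprB addrC subrK scalerA mulVf ?gt_eqF // scale1r.
have W := subdiff_mono nm s1 s2.
clearbody xi1 xi2.
set w := x1 - x2.
set a1 := al1^-1; set a2 := al2^-1.
have a1p : 0 < a1 by rewrite invr_gt0.
have a1le : a1 <= a0^-1 by rewrite lef_pV2 // posrE.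
have eq : vdot v (z1 - z2) =
   a1 * vdot v (g1 - g2) + (a1 - a2) * vdot v g2 - a1 * vdot (xi1 - xi2) w
   - a1 * vdot (v - w) (xi1 - xi2) - (a1 - a2) * vdot v xi2.
  rewrite ez1 ez2 (vdotC (xi1 - xi2) w) vdotBl !(vdotBr, vdotZr).
  rewrite /a1 /a2; ring.
rewrite eq.
set nv := enorm v; set ng := enorm (g1 - g2); set nvw := enorm (v - w).
set e := `|a1 - a2|.
have nv0 : 0 <= nv := enorm_ge0 v.
have ng0 : 0 <= ng := enorm_ge0 _.
have nvw0 : 0 <= nvw := enorm_ge0 _.
have e0 : 0 <= e := normr_ge0 _.
have P : a1 * vdot v (g1 - g2) <= a0^-1 * (nv * ng).
  apply: (le_trans (ler_wpM2l (ltW a1p) (CS v (g1 - g2)))).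
  by apply: ler_wpM2r => //; exact: mulr_ge0.
have Q : (a1 - a2) * vdot v g2 <= e * (nv * C).
  apply: (le_trans (ler_norm _)); rewrite normrM; apply: ler_wpM2l => //.
  by apply: (le_trans (CSabs _ _)); apply: ler_wpM2l.
have X : - ((a1 - a2) * vdot v xi2) <= e * (nv * (D * C)).
  apply: (le_trans (ler_norm _)); rewrite normrN normrM; apply: ler_wpM2l => //.
  by apply: (le_trans (CSabs _ _)); apply: ler_wpM2l.
have nxi : enorm (xi1 - xi2) <= 2 * (D * C).
  apply: (le_trans (enormB _ _)); have -> : 2 * (D * C) = D * C + D * C by ring.
  exact: lerD.
have S : - (a1 * vdot (v - w) (xi1 - xi2)) <= a0^-1 * (nvw * (2 * (D * C))).
  rewrite -mulrN; apply: (le_trans (ler_wpM2l (ltW a1p) (_ : _ <= nvw * (2 * (D * C))))).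
    rewrite lerNl; have := CSabs (v - w) (xi1 - xi2); rewrite ler_norml => /andP[+ _].
    move=> hh; apply: le_trans hh; rewrite lerN2; apply: ler_wpM2l => //.
  by apply: ler_wpM2r => //; rewrite !mulr_ge0.
have Wn : 0 <= a1 * vdot (xi1 - xi2) w by apply: mulr_ge0 => //; exact: ltW.
have ia0 : 0 < a0^-1 by rewrite invr_gt0.
have step : a1 * vdot v (g1 - g2) + (a1 - a2) * vdot v g2 - a1 * vdot (xi1 - xi2) w
   - a1 * vdot (v - w) (xi1 - xi2) - (a1 - a2) * vdot v xi2 <=
   a0^-1 * (nv * ng) + e * (nv * C) + e * (nv * (D * C)) + a0^-1 * (nvw * (2 * (D * C))).
  lra.
apply: (le_trans step).
have DC1 : 0 <= (D+1)*C by apply: mulr_ge0 => //; lra.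
have : 0 <= nv * (a0^-1 * e) + nv * ((D+1) * C * ng).
  by apply: addr_ge0; apply: mulr_ge0 => //; apply: mulr_ge0 => //; exact: ltW.
move=> hh.
rewrite /e -/a1 -/a2.
have -> : 2 * D * C / a0 * nvw = a0^-1 * (nvw * (2 * (D * C))) by ring.
move: hh; rewrite /e; set E := `|a1 - a2|. move=> hh.
have -> : nv * ((a0^-1 + (D + 1) * C) * (E + ng)) =
  a0^-1 * (nv * ng) + E * (nv * C) + E * (nv * (D * C)) +
  (nv * (a0^-1 * E) + nv * ((D + 1) * C * ng)) by ring.
lra.
Qed.

End Key.



Lemma ae_and (R : realType) (P Q : R -> Prop) : {ae (@lebesgue_measure R), forall t, P t} ->
  {ae lebesgue_measure, forall t, Q t} -> {ae lebesgue_measure, forall t, P t /\ Q t}.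
Proof. move=> h1 h2. apply: (filterS2 (ae_filter_ringOfSetsType _)) h1 h2 => x. by split. Qed.
Lemma ae_imp (R : realType) (P Q : R -> Prop) : (forall t, P t -> Q t) ->
  {ae (@lebesgue_measure R), forall t, P t} -> {ae lebesgue_measure, forall t, Q t}.
Proof. move=> h1 h2; have h3 := h2; apply: (filterS2 (ae_filter_ringOfSetsType _)) h2 h3 => x hx _; exact: h1. Qed.

Section W11.
Variables (R : realType) (d : nat) (z z' : R -> 'rV[R]_d).
Hypothesis W : W11loc z z'.
Local Notation mu := (@lebesgue_measure R).

Lemma W_int i a b : 0 <= a -> a < b ->
  mu.-integrable `]a, b] (EFin \o (fun s => z' s ord0 i)).
Proof.
move=> a0 ab; have [+ _] := W i => /(_ b (le_lt_trans a0 ab)) hi.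
apply: integrableS hi => //; apply: subset_itv; rewrite bnd_simp //.
Qed.

Lemma W_incr i a b : 0 <= a -> a < b ->
  z b ord0 i - z a ord0 i = Rintegral mu `]a, b] (fun s => z' s ord0 i).
Proof.
move=> a0 ab; have [hi he] := W i.
rewrite (he b) ?(le_trans a0 (ltW ab)) // (he a) // opprD addrACA subrr add0r.
apply: Rintegral_itvB; first exact: hi (le_lt_trans a0 ab).
- by rewrite bnd_simp.
- by rewrite bnd_simp ltW.
Qed.

End W11.



Section Main.
Variables (R : realType) (d : nat) (phi : 'rV[R]_d -> \bar R) (D C a0 : R).
Hypotheses (nm : never_minfty phi) (Dp : 0 < D) (PX : property_X phi D) (Cp : 0 < C) (a0p : 0 < a0).
Variables (alpha1 alpha2 : R -> R) (g1 g2 : R -> 'rV[R]_d)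
         (z01 z02 : 'rV[R]_d) (z1 z1' z2 z2' : R -> 'rV[R]_d).
Hypotheses (H01 : DC phi C z01) (H02 : DC phi C z02)
  (A1 : admissible_alpha alpha1 a0) (A2 : admissible_alpha alpha2 a0)
  (G1 : Linf_vec g1) (G2 : Linf_vec g2)
  (B1 : {ae lebesgue_measure, forall t, 0 < t -> enorm (g1 t) <= C})
  (B2 : {ae lebesgue_measure, forall t, 0 < t -> enorm (g2 t) <= C})
  (W1 : W1inf z1 z1') (W2 : W1inf z2 z2')
  (S1 : is_solution phi alpha1 g1 z01 z1 z1')
  (S2 : is_solution phi alpha2 g2 z02 z2 z2').
Local Notation mu := (@lebesgue_measure R).

Definition w t := z1 t - z2 t.
Definition w' t := z1' t - z2' t.
Definition hh t := `|(alpha1 t)^-1 - (alpha2 t)^-1| + enorm (g1 t - g2 t).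
Definition LL := a0^-1 + (D + 1) * C.
Definition KK := 2 * D * C / a0.

Lemma ae_key : {ae mu, forall t, 0 < t -> forall v,
  vdot v (w' t) <= enorm v * (LL * hh t) + KK * enorm (v - w t)}.
Proof.
have X1 := PX Cp H01 a0p A1 G1 B1 S1.
have X2 := PX Cp H02 a0p A2 G2 B2 S2.
case: S1 => _ _ s1; case: S2 => _ _ s2.
case: A1 => _ _ a1; case: A2 => _ _ a2.
have := ae_and X1 (ae_and X2 (ae_and s1 (ae_and s2 (ae_and a1 (ae_and a2 B2))))).
apply: ae_imp => t [x1 [x2 [t1 [t2 [b1 [b2 c2]]]]]] tp v.
rewrite /w' /LL /hh /KK /w.
exact: (key v nm a0p (ltW Dp) (ltW Cp) (b1 tp) (b2 tp) (c2 tp) (t1 tp) (t2 tp) (x1 tp) (x2 tp)).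
Qed.

Definition MM := (sval (cid (proj2 W1))) + (sval (cid (proj2 W2))).

Lemma ae_wbound : {ae mu, forall t, 0 < t -> enorm (w' t) <= MM}.
Proof.
rewrite /MM; case: cid => M1 /= [_ m1]; case: cid => M2 /= [_ m2].
have := ae_and m1 m2; apply: ae_imp => t [h1 h2] tp.
by apply: (le_trans (enormB _ _)); apply: lerD; [exact: h1|exact: h2].
Qed.

Lemma MM_ge0 : 0 <= MM.
Proof.
rewrite /MM; case: cid => M1 /= [b1 _]; case: cid => M2 /= [b2 _].
have h1 := b1 0 (lexx 0); have h2 := b2 0 (lexx 0).
by apply: addr_ge0; [exact: le_trans (enorm_ge0 _) h1|exact: le_trans (enorm_ge0 _) h2].
Qed.

Lemma w_int i a b : 0 <= a -> a < b ->
  mu.-integrable `]a, b] (EFin \o (fun s => w' s ord0 i)).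
Proof.
move=> a0' ab.
apply: (eq_integrable _ _ _ _ (integrableB _ (W_int (proj1 W1) i a0' ab) (W_int (proj1 W2) i a0' ab))) => // s _.
by rewrite /= /w' !mxE.
Qed.

Lemma w_incr i a b : 0 <= a -> a < b ->
  w b ord0 i - w a ord0 i = Rintegral mu `]a, b] (fun s => w' s ord0 i).
Proof.
move=> a0' ab.
have -> : (fun s => w' s ord0 i) = (fun s => z1' s ord0 i - z2' s ord0 i).
  by apply/funext => s; rewrite /w' !mxE.
rewrite RintegralB //; try exact: W_int.
rewrite -(W_incr (proj1 W1)) // -(W_incr (proj1 W2)) // /w !mxE; ring.
- exact: (W_int (proj1 W1) i a0' ab).
- exact: (W_int (proj1 W2) i a0' ab).
Qed.

Lemma w_lip a b : 0 <= a -> a < b -> enorm (w b - w a) <= d%:R * MM * (b - a).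
Proof.
move=> a0' ab; apply: (le_trans (enorm_le_sum _)).
have -> : d%:R * MM * (b - a) = \sum_(i < d) (MM * (b - a)).
  by rewrite sumr_const card_ord -[in RHS]mulr_natl mulrA.
apply: ler_sum => i _.
rewrite (_ : (w b - w a) ord0 i = w b ord0 i - w a ord0 i); last by rewrite !mxE.
rewrite w_incr // ler_norml; apply/andP; split.
- rewrite -mulNr -(Rint_cst_itv _ (ltW ab)); apply: ae_le_Rint => //.
  + exact: int_cst_itv.
  + exact: w_int.
  apply: ae_imp ae_wbound => t h /= tab.
  have tp : 0 < t by move: tab; rewrite in_itv /= => /andP[+ _]; apply: le_lt_trans.
  rewrite lerNl; apply: (le_trans _ (h tp)); apply: (le_trans _ (coord_le _ i)).
  by rewrite -normrN ler_norm.
- rewrite -(Rint_cst_itv _ (ltW ab)); apply: ae_le_Rint => //.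
  + exact: w_int.
  + exact: int_cst_itv.
  apply: ae_imp ae_wbound => t h /= tab.
  have tp : 0 < t by move: tab; rewrite in_itv /= => /andP[+ _]; apply: le_lt_trans.
  by apply: (le_trans _ (h tp)); apply: (le_trans _ (coord_le _ i)); exact: ler_norm.
Qed.


Lemma int_bounded (f : R -> R) (a b M : R) : measurable_fun `]a, b] f ->
  {ae mu, forall x, (`]a, b]%classic : set R) x -> `|f x| <= M} -> mu.-integrable `]a, b] (EFin \o f).
Proof.
move=> mf hb; apply/integrableP; split; first exact/measurable_realfun.measurable_EFinP.
apply: (@le_lt_trans _ _ ((`|M|)%:E * mu `]a, b])%E).
  apply: integral_le_bound => //; first exact/measurable_realfun.measurable_EFinP.
  apply: ae_imp hb => x h xab; rewrite /= lee_fin; apply: le_trans (h xab) _.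
  exact: ler_norm.
have := lebesgue_measure_itv `]a, b]; rewrite /= => ->.
by case: ifP => _; rewrite -?EFinD -?EFinM ltry.
Qed.

Lemma hh_meas : measurable_fun (`]0%R, +oo[ : set R) hh.
Proof.
case: A1 => m1 _ _; case: A2 => m2 _ _; case: G1 => mg1 _; case: G2 => mg2 _.
apply: measurable_realfun.measurable_funD.
  apply: measurableT_comp; first exact: measurable_realfun.normr_measurable.
  apply: measurable_realfun.measurable_funB.
    by apply: measurableT_comp => //; exact: measurable_inv.
  by apply: measurableT_comp => //; exact: measurable_inv.
have -> : (fun t => enorm (g1 t - g2 t)) = Num.sqrt \o (fun t =>
   \sum_(i < d) ((g1 t ord0 i - g2 t ord0 i) * (g1 t ord0 i - g2 t ord0 i))).
  apply/funext => t; rewrite /enorm /vdot /=; congr Num.sqrt.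
  by apply: eq_bigr => i _; rewrite !mxE.
apply: measurableT_comp; first exact: measurable_sqrt.
apply: measurable_sum => i.
by apply: measurable_realfun.measurable_funM; apply: measurable_realfun.measurable_funB.
Qed.

Lemma hh_ge0 t : 0 <= hh t.
Proof. by rewrite /hh addr_ge0 // enorm_ge0. Qed.

Lemma hh_int a b : 0 <= a -> mu.-integrable `]a, b] (EFin \o hh).
Proof.
move=> a0'; apply: (@int_bounded _ a b (2 * a0^-1 + 2 * C)).
  apply: measurable_funS hh_meas => //; apply: subset_itv => //.
case: A1 => _ _ b1; case: A2 => _ _ b2.
have := ae_and b1 (ae_and b2 (ae_and B1 B2)).
apply: ae_imp => t [h1 [h2 [h3 h4]]] tab.
have tp : 0 < t by move: tab; rewrite /= in_itv /= => /andP[+ _]; apply: le_lt_trans.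
rewrite ger0_norm ?hh_ge0 // /hh.
have ia0 : 0 < a0^-1 by rewrite invr_gt0.
have i1 : `|(alpha1 t)^-1| <= a0^-1.
  have p : 0 < alpha1 t by apply: lt_le_trans (h1 tp).
  rewrite ger0_norm; last by rewrite invr_ge0 ltW.
  by rewrite lef_pV2 ?posrE // h1.
have i2 : `|(alpha2 t)^-1| <= a0^-1.
  have p : 0 < alpha2 t by apply: lt_le_trans (h2 tp).
  rewrite ger0_norm; last by rewrite invr_ge0 ltW.
  by rewrite lef_pV2 ?posrE // h2.
have := ler_normB (alpha1 t)^-1 (alpha2 t)^-1.
have := enormB (g1 t) (g2 t).
have := h3 tp; have := h4 tp.
lra.
Qed.

Definition GG s := Rintegral mu `]0, s] hh.

Lemma GG_diff a b : 0 <= a -> a <= b -> GG b - GG a = Rintegral mu `]a, b] hh.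
Proof.
move=> a0' ab; apply: Rintegral_itvB.
- exact: hh_int (lexx 0).
- by rewrite bnd_simp.
- by rewrite bnd_simp.
Qed.

Lemma Rint_hh_ge0 a b : 0 <= Rintegral mu `]a, b] hh.
Proof. by apply: Rintegral_ge0 => x _; exact: hh_ge0. Qed.

Lemma GG0 : GG 0 = 0.
Proof. by rewrite /GG set_itv_ge ?Rintegral_set0 // bnd_simp ltxx. Qed.


Definition EE := 2 * KK * (d%:R * MM) + (d%:R * MM) ^+ 2.

Lemma KK_ge0 : 0 <= KK.
Proof.
rewrite /KK; apply: mulr_ge0; last by rewrite invr_ge0 ltW.
by apply: mulr_ge0; [apply: mulr_ge0; [|exact: ltW]|exact: ltW].
Qed.

Lemma LL_ge0 : 0 <= LL.
Proof.
rewrite /LL; apply: addr_ge0; first by rewrite invr_ge0 ltW.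
by apply: mulr_ge0; [apply: addr_ge0; [exact: ltW|] | exact: ltW].
Qed.

Lemma vdot_incr a b : 0 <= a -> a < b ->
  vdot (w a) (w b - w a) = Rintegral mu `]a, b] (fun s => vdot (w a) (w' s)).
Proof.
move=> a0' ab; set v := w a.
have mD : measurable (`]a, b]%classic : set R) by [].
have iF : forall i, mu.-integrable `]a, b] (EFin \o (fun s => v ord0 i * w' s ord0 i)).
  move=> i; apply: (eq_integrable _ _ _ _ (integrableZl _ (v ord0 i) (w_int i a0' ab))) => //.
rewrite /vdot.
transitivity (\sum_(i < d) Rintegral mu `]a, b] (fun s => v ord0 i * w' s ord0 i)).
  apply: eq_bigr => i _.
  rewrite (_ : (w b - v) ord0 i = w b ord0 i - w a ord0 i); last by rewrite !mxE.
  by rewrite w_incr // RintegralZl //; exact: w_int.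
by rewrite -(Rint_sum (index_enum 'I_d) mD iF).2.
Qed.

Lemma local a b : 0 <= a -> a < b ->
  enorm (w b) ^+ 2 <= enorm (w a) ^+ 2 + 2 * enorm (w a) * LL * (GG b - GG a)
     + EE * (b - a) ^+ 2.
Proof.
move=> a0' ab; set v := w a.
have mD : measurable (`]a, b]%classic : set R) by [].
have iF : forall i, mu.-integrable `]a, b] (EFin \o (fun s => v ord0 i * w' s ord0 i)).
  move=> i; apply: (eq_integrable _ _ _ _ (integrableZl _ (v ord0 i) (w_int i a0' ab))) => //.
have iV : mu.-integrable `]a, b] (EFin \o (fun s => vdot v (w' s))).
  exact: (Rint_sum (index_enum 'I_d) mD iF).1.
have iH : mu.-integrable `]a, b] (EFin \o (fun s => enorm v * (LL * hh s))).
  apply: (eq_integrable _ _ _ _ (integrableZl _ (enorm v * LL) (hh_int b a0'))) => // s _.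
  by rewrite /= mulrA.
have iC := int_cst_itv a b (KK * (d%:R * MM * (b - a))).
have iR : mu.-integrable `]a, b] (EFin \o (fun s => enorm v * (LL * hh s) + KK * (d%:R * MM * (b - a)))).
  by apply: (eq_integrable _ _ _ _ (integrableD _ iH iC)).
have i2 : vdot v (w b - v) <= Rintegral mu `]a, b] (fun s => enorm v * (LL * hh s) + KK * (d%:R * MM * (b - a))).
  rewrite vdot_incr //; apply: ae_le_Rint => //.
  apply: ae_imp ae_key => s h sab.
  have sp : 0 < s by move: sab; rewrite /= in_itv /= => /andP[+ _]; apply: le_lt_trans.
  have [as_ sb] : a < s /\ s <= b by move: sab; rewrite /= in_itv /= => /andP[].
  apply: (le_trans (h sp v)); apply: lerD => //; apply: ler_wpM2l; first exact: KK_ge0.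
  rewrite -enormN opprB; apply: (le_trans (w_lip a0' as_)).
  apply: ler_wpM2l; first by rewrite mulr_ge0 ?MM_ge0.
  by rewrite lerD2r.
have i3 : Rintegral mu `]a, b] (fun s => enorm v * (LL * hh s) + KK * (d%:R * MM * (b - a)))
   = enorm v * LL * (GG b - GG a) + KK * (d%:R * MM * (b - a)) * (b - a).
  rewrite RintegralD //; last first.
  rewrite Rint_cst_itv ?ltW //.
  rewrite (_ : (fun s => enorm v * (LL * hh s)) = (fun s => (enorm v * LL) * hh s)); last first.
    by apply/funext => s; rewrite mulrA.
  by rewrite RintegralZl // ?GG_diff // ?ltW //; exact: hh_int.
have i4 : enorm (w b) ^+ 2 = enorm v ^+ 2 + 2 * vdot v (w b - v) + enorm (w b - v) ^+ 2.
  rewrite !enorm_sqr.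
  have -> : vdot (w b) (w b) = vdot (v + (w b - v)) (v + (w b - v)) by rewrite addrC subrK.
  move: (v) => v'; move: (w b - v') => u.
  rewrite !(vdotDl, vdotDr) (vdotC u v'); ring.
have i5 : enorm (w b - v) ^+ 2 <= (d%:R * MM * (b - a)) ^+ 2.
  have := w_lip a0' ab; have := enorm_ge0 (w b - w a); rewrite -/v; nra.
rewrite i4 /EE.
move: i2; rewrite i3 => i2.
have := i5; lra.
Qed.


Lemma EE_ge0 : 0 <= EE.
Proof.
rewrite /EE; apply: addr_ge0; last exact: sqr_ge0.
by apply: mulr_ge0; [apply: mulr_ge0 => //; exact: KK_ge0|apply: mulr_ge0 => //; exact: MM_ge0].
Qed.

Lemma GG_ge0 a : 0 <= a -> 0 <= GG a.
Proof. by move=> a0'; have := GG_diff (lexx 0) a0'; rewrite GG0 subr0 => ->; exact: Rint_hh_ge0. Qed.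

Lemma disc (t eps : R) (n : nat) : 0 < t -> 0 < eps -> (0 < n)%N ->
  forall k, (k <= n)%N ->
  enorm (w (k%:R * (t / n%:R))) <= enorm (w 0) + eps + LL * GG (k%:R * (t / n%:R))
     + k%:R * (EE * (t / n%:R) ^+ 2 / (2 * eps)).
Proof.
move=> tp ep np; set dl := t / n%:R; set c := EE * dl ^+ 2 / (2 * eps).
have dlp : 0 < dl by rewrite divr_gt0 // ltr0n.
have c0 : 0 <= c by rewrite /c divr_ge0 ?mulr_ge0 ?EE_ge0 ?sqr_ge0 // ltW.
have ce : 2 * eps * c = EE * dl ^+ 2.
  by rewrite /c mulrC divfK // mulf_neq0 // gt_eqF.
elim => [_|k ih kn].
  rewrite !mul0r GG0 mulr0 !addr0; rewrite lerDl; exact: ltW.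
have a0' : 0 <= k%:R * dl by rewrite mulr_ge0 // ltW.
have eb : k.+1%:R * dl = k%:R * dl + dl by rewrite -natr1 mulrDl mul1r.
have ab : k%:R * dl < k.+1%:R * dl by rewrite eb ltrDl.
have L1 := local a0' ab.
have I1 := ih (ltnW kn).
move: L1 I1; rewrite eb; set a := k%:R * dl.
have Dp' : 0 <= GG (a + dl) - GG a by rewrite GG_diff ?Rint_hh_ge0 // lerDl ltW.
have Ga : 0 <= GG a := GG_ge0 a0'.
have -> : a + dl - a = dl by rewrite addrC addKr.
set u := enorm (w a); set u' := enorm (w (a + dl)); set Dl := GG (a + dl) - GG a.
have u0 : 0 <= u := enorm_ge0 _.
have u'0 : 0 <= u' := enorm_ge0 _.
have w00 : 0 <= enorm (w 0) := enorm_ge0 _.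
have X0 : 0 <= LL * Dl by rewrite mulr_ge0 // LL_ge0.
move=> L1 I1.
set P := enorm (w 0) + eps + LL * GG a + k%:R * c.
have Pe : eps <= P.
  rewrite /P -addrA -addrA addrC -!addrA lerDl; rewrite addrA; apply: addr_ge0 => //.
  apply: addr_ge0 => //; first by rewrite mulr_ge0 // LL_ge0.
  by rewrite mulr_ge0.
have goalE : enorm (w 0) + eps + LL * GG (a + dl) + k.+1%:R * c = P + LL * Dl + c.
  by rewrite /P /Dl -natr1; ring.
rewrite goalE.
have Q0 : 0 <= P + LL * Dl + c by have := ltW ep; lra.
have sq : u' ^+ 2 <= (P + LL * Dl + c) ^+ 2.
  apply: (le_trans L1).
  have h1 : u ^+ 2 <= P ^+ 2 by rewrite ler_pXn2r // ?nnegrE //; apply: le_trans u0 I1.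
  have h2 : 2 * u * LL * Dl <= 2 * P * (LL * Dl).
    by rewrite -mulrA ler_wpM2r // ler_wpM2l.
  have h3 : EE * dl ^+ 2 <= 2 * P * c by rewrite -ce ler_wpM2r // ler_wpM2l.
  have h4 : 0 <= (LL * Dl + c) ^+ 2 := sqr_ge0 _.
  have : (P + LL * Dl + c) ^+ 2 = P ^+ 2 + 2 * P * (LL * Dl) + 2 * P * c + (LL * Dl + c) ^+ 2 by ring.
  move=> ->; lra.
by move: sq; rewrite ler_pXn2r // nnegrE.
Qed.

Lemma final t : 0 < t -> enorm (w t) <= enorm (w 0) + LL * GG t.
Proof.
move=> tp; apply/ler_addgt0Pr => e ep.
set eps := e / 2.
have epsp : 0 < eps by rewrite divr_gt0.
set X := EE * t ^+ 2 / (eps * e).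
set n := (Num.Def.truncn X).+1.
have Xn : X < n%:R by exact: truncnS_gt.
have np : (0 < n)%N by [].
have nR : 0 < n%:R :> R by rewrite ltr0n.
have := disc tp epsp np (leqnn n).
have -> : n%:R * (t / n%:R) = t by rewrite mulrC divfK // gt_eqF.
have -> : n%:R * (EE * (t / n%:R) ^+ 2 / (2 * eps)) = EE * t ^+ 2 / (2 * eps * n%:R).
  by field; rewrite !gt_eqF.
have hb : EE * t ^+ 2 / (2 * eps * n%:R) <= eps.
  rewrite ler_pdivrMr ?mulr_gt0 //.
  move: Xn; rewrite ltr_pdivrMr ?mulr_gt0 // => Xn.
  rewrite /eps; move: Xn; rewrite /eps => Xn.
  have : e / 2 * e * n%:R = 2 * (e / 2) * n%:R * (e / 2) by field.
  move: Xn; set E2 := e / 2 => Xn He.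
  have : EE * t ^+ 2 <= n%:R * (E2 * e) by apply: ltW.
  have eE : e = 2 * E2 by rewrite /E2; field.
  rewrite eE; nra.
move=> h; apply: (le_trans h).
have : e = eps + eps by rewrite /eps; field.
move=> ee; rewrite [in X in _ <= X]ee.
lra.
Qed.


Lemma main_res t : 0 < t ->
  ((enorm (z1 t - z2 t))%:E <= (enorm (z01 - z02))%:E +
     LL%:E * \int[lebesgue_measure]_(tau in (`[0%R, t] : set R)) (hh tau)%:E)%E.
Proof.
move=> tp.
have ht : (\int[lebesgue_measure]_(tau in (`[0%R, t] : set R)) (hh tau)%:E = (GG t)%:E)%E.
  rewrite -integral_itv_obnd_cbnd; last first.
    apply/measurable_realfun.measurable_EFinP.
    apply: measurable_funS hh_meas => //; apply: subset_itv => //.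
  rewrite /GG /Rintegral fineK //.
  exact: integrable_fin_num (hh_int t (lexx 0)).
rewrite ht -EFinM -EFinD lee_fin.
case: S1 => _ e1 _; case: S2 => _ e2 _.
by have := final tp; rewrite /w e1 e2.
Qed.

End Main.

Theorem proposition3p4 (R : realType) (d : nat) (phi : 'rV[R]_d -> \bar R) (D : R) :
  proper_fun phi -> convex_fun phi -> lsc_fun phi -> 0 < D -> property_X phi D ->
  forall (C alpha0 : R), 0 < C -> 0 < alpha0 ->
  exists L : R,
  forall (alpha1 alpha2 : R -> R) (g1 g2 : R -> 'rV[R]_d)
         (zeta01 zeta02 : 'rV[R]_d) (zeta1 zeta1' zeta2 zeta2' : R -> 'rV[R]_d),
    DC phi C zeta01 -> DC phi C zeta02 ->
    admissible_alpha alpha1 alpha0 -> admissible_alpha alpha2 alpha0 ->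
    Linf_vec g1 -> Linf_vec g2 ->
    {ae lebesgue_measure, forall t, 0 < t -> enorm (g1 t) <= C} ->
    {ae lebesgue_measure, forall t, 0 < t -> enorm (g2 t) <= C} ->
    W1inf zeta1 zeta1' -> W1inf zeta2 zeta2' ->
    is_solution phi alpha1 g1 zeta01 zeta1 zeta1' ->
    is_solution phi alpha2 g2 zeta02 zeta2 zeta2' ->
    forall t : R, 0 < t ->
      ((enorm (zeta1 t - zeta2 t))%:E <=
       (enorm (zeta01 - zeta02))%:E +
       L%:E * \int[lebesgue_measure]_(tau in (`[0%R, t] : set R))
                 (`|(alpha1 tau)^-1 - (alpha2 tau)^-1| + enorm (g1 tau - g2 tau))%:E)%E.
Proof.
move=> [nm _] _ _ Dp PX C a0 Cp a0p; exists (LL D C a0).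
move=> alpha1 alpha2 g1 g2 z01 z02 z1 z1' z2 z2' H01 H02 A1 A2 G1 G2 B1 B2 W1 W2 S1 S2 t tp.
exact: (main_res nm Dp PX Cp a0p H01 H02 A1 A2 G1 G2 B1 B2 W1 W2 S1 S2 tp).
Qed.
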